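(* Let $L_A$ and $L_B$ be two orderings (lists) of the same set $\mathbb{E}$ of $n$ elements, let $e\in\mathbb{E}$ have position $x$ in $L_A$, and let $y\ge 1$ be an integer such that the position of $e$ in $L_B$ is at most $y$. Let $\phi$ denote the number of inversions between $L_A$ and $L_B$ (ordered pairs $(i,j)$ with $i$ before $j$ in $L_A$ and after $j$ in $L_B$), and let $\Delta\phi$ be the change in $\phi$ when $e$ is moved to the front of $L_A$ (keeping the relative order of the other elements) while $L_B$ is unchanged. Then $$3x+4\Delta\phi-\psi(x,y)\le 0,$$ where $\psi(x,y)=7x$ if $1\le x\le y$, $\psi(x,y)=8y-x$ if $y\le x\le 8y$, and $\psi(x,y)=0$ if $x\ge 8y$.
   Context: Positions in a list are numbered $1,\dots,n$ from the head. *)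

(* Defs.v *)
(* Lists are seq T over an eqType; positions are 1-based:
   the position of a in s is (index a s).+1. *)
From mathcomp Require Import all_boot all_order all_algebra.
Set Implicit Arguments. Unset Strict Implicit. Unset Printing Implicit Defensive.
Import Order.TTheory GRing.Theory Num.Theory.

Definition before (T : eqType) (s : seq T) (a b : T) : bool :=
  (index a s < index b s)%N.

Definition inversions (T : eqType) (LA LB : seq T) : nat :=
  (\sum_(i <- LA) \sum_(j <- LA) (before LA i j && before LB j i))%N.

Definition move_to_front (T : eqType) (e : T) (L : seq T) : seq T :=
  e :: filter (predC1 e) L.

Definition psi (x y : nat) : int :=
  if (x <= y)%N then Posz (7 * x)
  else if (x <= 8 * y)%N then (Posz (8 * y) - Posz x)%R
  else 0%R.

(* Main.v *)
Require Import Defs.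
From mathcomp Require Import all_boot all_order all_algebra.
From mathcomp Require Import zify.
Import Order.TTheory GRing.Theory Num.Theory.

Section Aux.
Variable T : eqType.
Variable LB : seq T.

Lemma sum_count (P : pred T) (s : seq T) :
  (\sum_(j <- s) (P j : nat))%N = count P s.
Proof. by elim: s => [|a s IH]; rewrite ?big_nil ?big_cons ?IH. Qed.

Lemma index_cons_ne (a j : T) (r : seq T) : a != j ->
  index j (a :: r) = (index j r).+1.
Proof. by move=> h; rewrite /= (negbTE h). Qed.

Lemma inv_cons (a : T) (r : seq T) : a \notin r ->
  inversions (a :: r) LB =
  (\sum_(j <- r) (before LB j a : nat) + inversions r LB)%N.
Proof.
move=> ha; rewrite /inversions big_cons big_cons /before index_head ltnn /=.
congr (_ + _)%N.
  apply: eq_big_seq => j jr.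
  have aj : a != j by apply/eqP=> E; rewrite E jr in ha.
  by rewrite (negbTE aj).
apply: eq_big_seq => i ir.
have ai : a != i by apply/eqP=> E; rewrite E ir in ha.
rewrite big_cons /= (negbTE ai) eqxx ltn0 /= add0n.
apply: eq_big_seq => j jr.
have aj : a != j by apply/eqP=> E; rewrite E jr in ha.
by rewrite (negbTE aj).
Qed.

Lemma inv_mid (e : T) (s2 : seq T) : forall s1,
  uniq (s1 ++ e :: s2) ->
  inversions (s1 ++ e :: s2) LB =
  (inversions (s1 ++ s2) LB + \sum_(a <- s1) (before LB e a : nat)
    + \sum_(j <- s2) (before LB j e : nat))%N.
Proof.
elim=> [|a s1 IH] /=.
  by move=> /andP[he _]; rewrite inv_cons // big_nil; lia.
move=> /andP[ha hu].
rewrite inv_cons // inv_cons; last first.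
  by move: ha; rewrite !mem_cat in_cons !negb_or => /and3P[-> _ ->].
rewrite IH // big_cons !big_cat big_cons /=.
lia.
Qed.

End Aux.

Theorem mainTheorem8 (T : eqType) (n : nat) (LA LB : seq T) (e : T) (x y : nat) :
  uniq LA -> perm_eq LA LB -> size LA = n ->
  e \in LA -> x = (index e LA).+1 ->
  (1 <= y)%N -> ((index e LB).+1 <= y)%N ->
  (Posz (3 * x)
   + Posz 4 * (Posz (inversions (move_to_front e LA) LB) - Posz (inversions LA LB))
   - psi x y <= 0)%R.
Proof.
move=> uLA pAB _ eA -> y1 hy.
have memB : forall j, (j \in LA) = (j \in LB) by apply: perm_mem.
case/splitPr: eA uLA memB => s1 s2 uLA memB.
have := uLA; rewrite cat_uniq /= => /and3P[u1 /norP[e1 _] /andP[e2 u2]].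
have hidx : index e (s1 ++ e :: s2) = size s1.
  by rewrite index_cat (negbTE e1) index_head addn0.
rewrite hidx.
have hf : filter (predC1 e) (s1 ++ e :: s2) = s1 ++ s2.
  rewrite filter_cat /= eqxx /=.
  congr (_ ++ _); apply/all_filterP.
    by apply/allP=> j js /=; apply/eqP=> E; rewrite -E js in e1.
  by apply/allP=> j js /=; apply/eqP=> E; rewrite -E js in e2.
rewrite /move_to_front hf inv_cons; last by rewrite mem_cat negb_or e1.
rewrite inv_mid // big_cat /=.
set C := (\sum_(j <- s1) (before LB j e : nat))%N.
set A := (\sum_(a <- s1) (before LB e a : nat))%N.
set B := (\sum_(j <- s2) (before LB j e : nat))%N.
have hAC : (A + C = size s1)%N.
  rewrite /A /C -big_split /= -sum1_size big_seq [in RHS]big_seq.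
  apply: eq_bigr => j js.
  have jB : j \in LB by rewrite -memB mem_cat js.
  have eB : e \in LB by rewrite -memB mem_cat mem_head orbT.
  have nej : e != j by apply/eqP=> E; rewrite E js in e1.
  rewrite /before.
  have : index e LB != index j LB.
    by apply: contra nej => /eqP h; rewrite -(nth_index e eB) h nth_index.
  case: ltngtP => //=; case: ltngtP => //; lia.
have hCs : (C <= size s1)%N by lia.
have hCp : (C <= index e LB)%N.
  rewrite /C sum_count -size_filter.
  set p := index e LB.
  have eB : e \in LB by rewrite -memB mem_cat mem_head orbT.
  have pB : (p <= size LB)%N by rewrite ltnW // index_mem.
  have : (size (filter (fun j => before LB j e) s1) <= size (take p LB))%N.
    apply: uniq_leq_size; first by rewrite filter_uniq.
    move=> j; rewrite mem_filter /before => /andP[hj js].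
    have jB : j \in LB by rewrite -memB mem_cat js.
    rewrite -(cat_take_drop p LB) index_cat in hj.
    case: (boolP (j \in take p LB)) hj => // _.
    by rewrite cat_take_drop -/p size_take_min; lia.
  by rewrite size_take_min; lia.
rewrite /psi.
case: ifP => h1; [|case: ifP => h2]; lia.
Qed.
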